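(* Consider the second-order Kuramoto model with bonding force $$\dot\theta_i=\omega_i,\qquad \dot\omega_i=\frac{1}{N}\sum_{j=1}^N\big[\kappa_0\cos(\theta_j-\theta_i)+\kappa_1\big](\omega_j-\omega_i)+\frac{\kappa_2}{N}\sum_{j=1}^N\big[|\theta_j-\theta_i|-\theta^\infty_{ij}\big]\operatorname{sgn}(\theta_j-\theta_i),\quad i\in[N].$$ Suppose $(\Theta^0,W^0)\in\mathcal{S}$, $\mathcal{E}(0)<\frac{\kappa_2(\min_{i\ne j}\theta^\infty_{ij})^2}{2N}$, $\kappa_0\cos\mathcal{U}+\kappa_1>0$, $\kappa_2>0$, and let $\{\theta_i\}$ be a global smooth solution. Then $$\inf_{0\le t<\infty}\min_{i\ne j}|\theta_j(t)-\theta_i(t)|\ge\mathcal{L}>0.$$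
   Context: $N\ge2$, $\kappa_0,\kappa_1\ge0$; $[\theta^\infty_{ij}]$ real symmetric with zero diagonal; $\operatorname{sgn}$ the sign function. $\mathcal{E}:=\frac12\sum_i|\omega_i|^2+\frac{\kappa_2}{4N}\sum_{i,j}(|\theta_j-\theta_i|-\theta^\infty_{ij})^2$; $\mathcal{U}:=\max_{i\ne j}\theta^\infty_{ij}+\sqrt{2N\mathcal{E}(0)/\kappa_2}$; $\mathcal{L}:=\min_{i\ne j}\theta^\infty_{ij}-\sqrt{2N\mathcal{E}(0)/\kappa_2}$; $\mathcal{S}:=\{(\Theta,W)\in\mathbb{R}^{2N}:|\theta_i-\theta_j|<\mathcal{U}<\pi\ \forall i,j\}$. *)

(* Defs.v *)
From HB Require Import structures.
From mathcomp Require Import all_boot all_order all_algebra.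
From mathcomp Require Import all_classical all_reals all_analysis.
Set Implicit Arguments. Unset Strict Implicit. Unset Printing Implicit Defensive.
Import Order.TTheory GRing.Theory Num.Theory.
Import numFieldNormedType.Exports.
Local Open Scope ring_scope.

Definition offdiag (R : realType) (N : nat) (th : 'I_N -> 'I_N -> R) : seq R :=
  [seq th p.1 p.2 | p <- enum [pred p : 'I_N * 'I_N | p.1 != p.2]].

(* min_{i<>j} th i j  and  max_{i<>j} th i j  (meaningful for N >= 2,
   where the list is nonempty) *)
Definition offdiag_min (R : realType) (N : nat) (th : 'I_N -> 'I_N -> R) : R :=
  foldr Num.min (head 0 (offdiag th)) (offdiag th).
Definition offdiag_max (R : realType) (N : nat) (th : 'I_N -> 'I_N -> R) : R :=
  foldr Num.max (head 0 (offdiag th)) (offdiag th).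

Definition energy (R : realType) (N : nat) (k2 : R) (thinf : 'I_N -> 'I_N -> R)
  (Th W : 'I_N -> R) : R :=
  2^-1 * \sum_(i < N) (W i) ^+ 2
  + k2 / (4 * N%:R) * \sum_(i < N) \sum_(j < N) (`|Th j - Th i| - thinf i j) ^+ 2.

Definition Ubound (R : realType) (N : nat) (k2 : R) (thinf : 'I_N -> 'I_N -> R) (E0 : R) : R :=
  offdiag_max thinf + Num.sqrt (2 * N%:R * E0 / k2).
Definition Lbound (R : realType) (N : nat) (k2 : R) (thinf : 'I_N -> 'I_N -> R) (E0 : R) : R :=
  offdiag_min thinf - Num.sqrt (2 * N%:R * E0 / k2).

Definition kuramoto_rhs (R : realType) (N : nat) (k0 k1 k2 : R)
  (thinf : 'I_N -> 'I_N -> R) (Th W : 'I_N -> R) (i : 'I_N) : R :=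
  N%:R^-1 * \sum_(j < N) (k0 * cos (Th j - Th i) + k1) * (W j - W i)
  + k2 / N%:R * \sum_(j < N) (`|Th j - Th i| - thinf i j) * Num.sg (Th j - Th i).

(* Main.v *)
Require Import Defs.
From HB Require Import structures.
From mathcomp Require Import all_boot all_order all_algebra.
From mathcomp Require Import all_classical all_reals all_analysis.
From mathcomp Require Import ring lra.
Set Implicit Arguments. Unset Strict Implicit. Unset Printing Implicit Defensive.
Import Order.TTheory GRing.Theory Num.Theory.
Import numFieldNormedType.Exports.
Local Open Scope ring_scope.
Local Open Scope classical_set_scope.

Section Help.
Variable R : realType.

Lemma der_cont (f : R -> R) (t l : R) : is_derive t (1:R) f l -> {for t, continuous f}.
Proof.
move=> H; apply/differentiable_continuous; rewrite -derivable1_diffP.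
exact: ex_derive.
Qed.

Lemma near_ex (P : R -> Prop) (t : R) : (\forall u \near t, P u) ->
  exists2 d : R, 0 < d & forall u, `|t - u| < d -> P u.
Proof.
move=> /nbhs_ballP [d d0 Hd]; exists d => // u tu; apply: Hd.
Qed.

Lemma abs_der (f : R -> R) (t df : R) : is_derive t (1:R) f df -> f t != 0 ->
  is_derive t (1:R) (fun s => `|f s|) (Num.sg (f t) * df).
Proof.
move=> Hd ft0; have C := der_cont Hd.
case: (ltgtP (f t) 0) ft0 => // [ftn|ftp] _.
- have Hn : (\forall s \near t, f s < 0) by exact: (cvgr_lt _ C _ ftn).
  rewrite ltr0_sg // mulN1r.
  apply: (near_eq_is_derive _ (is_deriveN Hd)).
  by apply: filterS Hn => s /= fs; rewrite ltr0_norm.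
- have Hn : (\forall s \near t, 0 < f s) by exact: (cvgr_gt _ C _ ftp).
  rewrite gtr0_sg // mul1r.
  apply: (near_eq_is_derive _ Hd).
  by apply: filterS Hn => s /= fs; rewrite gtr0_norm.
Qed.

Lemma closure_le (g : R -> R) (x c : R) : {for x, continuous g} -> 0 < x ->
  (forall u, 0 <= u -> u < x -> g u <= c) -> g x <= c.
Proof.
move=> C x0 H; rewrite leNgt; apply/negP => cg.
have [d d0 Hd] := near_ex (cvgr_gt _ C _ cg).
set u := x - Num.min x d / 2.
have m0 : 0 < Num.min x d by rewrite lt_min x0 d0.
have mx : Num.min x d <= x by rewrite ge_min lexx.
have md : Num.min x d <= d by rewrite ge_min lexx orbT.
have : g u <= c.
  apply: H; rewrite /u.
  - rewrite subr_ge0; apply: le_trans mx; rewrite ler_pdivrMr // ler_peMr //; [exact: ltW | by rewrite ler1n].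
  - by rewrite ltrBlDr ltrDl divr_gt0.
rewrite leNgt => /negP; apply; apply: Hd.
rewrite /u opprB addrC subrK gtr0_norm ?divr_gt0 //.
lra.
Qed.
End Help.
Section Help2.
Variable R : realType.

Lemma der_sum n (h : 'I_n -> R -> R) (u : R) (dh : 'I_n -> R) :
  (forall i, is_derive u (1:R) (h i) (dh i)) ->
  is_derive u (1:R) (fun s => \sum_(i < n) h i s) (\sum_(i < n) dh i).
Proof.
move=> H; have := is_derive_sum H; by rewrite fct_sumE.
Qed.

Lemma der_scal (f : R -> R) (k u df : R) : is_derive u (1:R) f df ->
  is_derive u (1:R) (fun s => k * f s) (k * df).
Proof.
move=> H; exact: (is_deriveZ k H).
Qed.

Lemma der_sqr (f : R -> R) (u df : R) : is_derive u (1:R) f df ->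
  is_derive u (1:R) (fun s => (f s) ^+ 2) (2 * f u * df).
Proof.
move=> H; have := is_deriveX 2 H.
have -> : (f ^+ 2) = (fun s => (f s) ^+ 2) by apply/funext => s; rewrite /= !expr2.
by rewrite expr1.
Qed.

Lemma der_add (f g : R -> R) (u df dg : R) : is_derive u (1:R) f df ->
  is_derive u (1:R) g dg -> is_derive u (1:R) (fun s => f s + g s) (df + dg).
Proof. move=> H1 H2; exact: (is_deriveD H1 H2). Qed.

Lemma der_sub (f g : R -> R) (u df dg : R) : is_derive u (1:R) f df ->
  is_derive u (1:R) g dg -> is_derive u (1:R) (fun s => f s - g s) (df - dg).
Proof. move=> H1 H2; exact: (is_deriveB H1 H2). Qed.

Lemma der_subc (f : R -> R) (c u df : R) : is_derive u (1:R) f df ->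
  is_derive u (1:R) (fun s => f s - c) df.
Proof.
move=> H1; have := der_sub H1 (is_derive_cst c u 1); by rewrite subr0.
Qed.

Lemma fmin_le (s : seq R) h x : x \in s -> foldr Num.min h s <= x.
Proof.
elim: s => // y s IH; rewrite inE => /orP [/eqP ->|xs] /=.
  by rewrite ge_min lexx.
by rewrite ge_min IH ?orbT.
Qed.

Lemma fmax_ge (s : seq R) h x : x \in s -> x <= foldr Num.max h s.
Proof.
elim: s => // y s IH; rewrite inE => /orP [/eqP ->|xs] /=.
  by rewrite le_max lexx.
by rewrite le_max IH ?orbT.
Qed.

Lemma fmin_in (s : seq R) h : foldr Num.min h s \in h :: s.
Proof.
elim: s => [|y s IH] /=; first by rewrite inE.
rewrite /Num.min; case: ifP => _; first by rewrite !inE eqxx orbT.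
move: IH; rewrite !inE => /orP [->|->] //; by rewrite !orbT.
Qed.
End Help2.

Section Main.
Variables (R : realType) (N : nat) (k0 k1 k2 : R) (thinf : 'I_N -> 'I_N -> R).
Hypothesis k2gt : 0 < k2.
Hypothesis symm : forall i j, thinf i j = thinf j i.
Hypothesis diag0 : forall i, thinf i i = 0.

Lemma two_le_sum (F : 'I_N -> R) i j : i != j -> (forall k, 0 <= F k) ->
  F i + F j <= \sum_k F k.
Proof.
move=> ij F0; rewrite (bigD1 i) // (bigD1 j) /=; last by rewrite eq_sym.
rewrite addrA lerDl; apply: sumr_ge0 => k _; exact: F0.
Qed.

Lemma pair_bound (Th W : 'I_N -> R) i j : i != j ->
  k2 / (2 * N%:R) * (`|Th j - Th i| - thinf i j) ^+ 2 <= energy k2 thinf Th W.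
Proof.
move=> ij; have N0 : (0 < N)%N by case: N i {ij} => // -[].
have N0' : 0 < N%:R :> R by rewrite ltr0n.
set f := fun x y => (`|Th y - Th x| - thinf x y) ^+ 2.
have fs : f j i = f i j by rewrite /f distrC symm.
have H1 : f i j + f j i <= \sum_x \sum_y f x y.
  apply: le_trans (two_le_sum (F := fun x => \sum_y f x y) ij _).
    apply: lerD.
      by rewrite (bigD1 j) //= lerDl; apply: sumr_ge0 => k _; exact: sqr_ge0.
    by rewrite (bigD1 i) //= lerDl; apply: sumr_ge0 => k _; exact: sqr_ge0.
  by move=> k; apply: sumr_ge0 => y _; exact: sqr_ge0.
rewrite /energy -/f.
have W0 : 0 <= 2^-1 * \sum_(i < N) (W i) ^+ 2.
  by apply: mulr_ge0 => //; apply: sumr_ge0 => k _; exact: sqr_ge0.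
have -> : k2 / (2 * N%:R) * f i j = k2 / (4 * N%:R) * (f i j + f j i).
  rewrite fs; field; by rewrite lt0r_neq0.
have c0 : 0 <= k2 / (4 * N%:R) by apply: divr_ge0; [exact: ltW| rewrite mulr_ge0 // ltW].
rewrite -[X in X <= _]add0r; apply: lerD => //.
exact: ler_wpM2l.
Qed.

Lemma in_offdiag i j : i != j -> thinf i j \in offdiag thinf.
Proof.
move=> ij; apply/mapP; exists (i, j) => //; by rewrite mem_enum inE.
Qed.

Lemma min_le i j : i != j -> offdiag_min thinf <= thinf i j.
Proof. by move=> ij; apply: fmin_le; exact: in_offdiag. Qed.

Lemma max_ge i j : i != j -> thinf i j <= offdiag_max thinf.
Proof. by move=> ij; apply: fmax_ge; exact: in_offdiag. Qed.

Lemma min_attained : (2 <= N)%N -> exists i j, i != j /\ offdiag_min thinf = thinf i j.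
Proof.
move=> N2.
pose i0 : 'I_N := Ordinal (leq_trans (isT : (0 < 2)%N) N2).
pose i1 : 'I_N := Ordinal N2.
have ne : i0 != i1 by apply/eqP => /(congr1 val).
have inn := in_offdiag ne.
have : offdiag_min thinf \in offdiag thinf.
  rewrite /offdiag_min; have := fmin_in (offdiag thinf) (head 0 (offdiag thinf)).
  rewrite inE => /orP [/eqP ->|//].
  by move: inn; case: (offdiag thinf) => //= a l _; rewrite inE eqxx.
case/mapP => -[i j]; rewrite mem_enum inE /= => ij ->.
by exists i, j.
Qed.

Variables (theta omega : R -> 'I_N -> R).
Hypothesis HD : forall t : R, 0 <= t -> forall i : 'I_N,
     is_derive t (1 : R) (fun s : R => theta s i) (omega t i) /\
     is_derive t (1 : R) (fun s : R => omega s i)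
       (kuramoto_rhs k0 k1 k2 thinf (theta t) (omega t) i).

Definition En s := energy k2 thinf (theta s) (omega s).
Definition aa s i j := k0 * cos (theta s j - theta s i) + k1.

Definition Dexp u := 2^-1 * \sum_(i < N) (2 * omega u i * kuramoto_rhs k0 k1 k2 thinf (theta u) (omega u) i)
  + k2 / (4 * N%:R) * \sum_(i < N) \sum_(j < N) (2 * (`|theta u j - theta u i| - thinf i j)
      * (Num.sg (theta u j - theta u i) * (omega u j - omega u i))).

Lemma En_der (u : R) : 0 <= u -> (forall i j, i != j -> theta u j - theta u i != 0) ->
  is_derive u (1:R) En (Dexp u).
Proof.
move=> u0 Hne; rewrite /En /energy /Dexp.
apply: der_add.
  apply: der_scal; apply: der_sum => i; apply: der_sqr; exact: (HD u0 i).2.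
apply: der_scal; apply: der_sum => i; apply: der_sum => j; apply: der_sqr.
apply: der_subc.
have [->|ij] := eqVneq i j.
  rewrite subrr sgr0 mul0r.
  have -> : (fun s => `|theta s j - theta s j|) = (fun _ => 0) by apply/funext => s; rewrite subrr normr0.
  exact: is_derive_cst.
apply: abs_der; last exact: Hne.
apply: der_sub; [exact: (HD u0 j).1 | exact: (HD u0 i).1].
Qed.

Lemma Dexp_le0 (u : R) : (0 < N)%N -> (forall i j, 0 <= aa u i j) -> Dexp u <= 0.
Proof.
move=> Npos a0.
set w := omega u; set Th := theta u.
pose a i j := k0 * cos (Th j - Th i) + k1.
pose b i j := `|Th j - Th i| - thinf i j.
pose g i j := Num.sg (Th j - Th i).
pose S := \sum_(i < N) \sum_(j < N) w i * (a i j * (w j - w i)).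
pose X := \sum_(i < N) \sum_(j < N) w i * (b i j * g i j).
pose Y := \sum_(i < N) \sum_(j < N) b i j * g i j * w j.
have e1 : \sum_(i < N) (2 * w i * kuramoto_rhs k0 k1 k2 thinf Th w i)
    = 2 * N%:R^-1 * S + 2 * (k2 / N%:R) * X.
  rewrite /S /X !mulr_sumr -big_split /=; apply: eq_bigr => i _.
  rewrite -!mulr_sumr /kuramoto_rhs /a /b /g; ring.
have e2 : \sum_(i < N) \sum_(j < N) (2 * b i j * (g i j * (w j - w i))) = 2 * (Y - X).
  rewrite /X /Y -sumrB mulr_sumr; apply: eq_bigr => i _.
  rewrite -sumrB mulr_sumr; apply: eq_bigr => j _; ring.
have e3 : Y = - X.
  rewrite /Y /X exchange_big /= -sumrN; apply: eq_bigr => i _.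
  rewrite -sumrN; apply: eq_bigr => j _.
  rewrite /b /g distrC symm -(opprB (Th j)) sgrN; ring.
have e4 : 2 * S = - \sum_(i < N) \sum_(j < N) a i j * (w j - w i) ^+ 2.
  have -> : 2 * S = S + S by ring.
  rewrite {2}/S exchange_big /= /S -big_split -sumrN /=; apply: eq_bigr => i _.
  rewrite -big_split -sumrN /=; apply: eq_bigr => j _.
  rewrite /a -(opprB (Th j)) cosN; ring.
have S0 : S <= 0.
  have : 2 * S <= 0.
    rewrite e4 oppr_le0; apply: sumr_ge0 => i _; apply: sumr_ge0 => j _.
    by apply: mulr_ge0; [exact: a0 | exact: sqr_ge0].
  by rewrite pmulr_rle0.
rewrite /Dexp -/w -/Th e1.
rewrite (_ : \sum_(i < N) \sum_(j < N) _ = 2 * (Y - X)); last exact: e2.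
rewrite e3.
have N0 : 0 <= N%:R^-1 :> R by rewrite invr_ge0.
have -> : 2^-1 * (2 * N%:R^-1 * S + 2 * (k2 / N%:R) * X) + k2 / (4 * N%:R) * (2 * (- X - X))
  = N%:R^-1 * S.
  field; by rewrite pnatr_eq0 -lt0n.
exact: mulr_ge0_le0.
Qed.

Hypothesis k0ge : 0 <= k0.
Hypothesis k1ge : 0 <= k1.
Hypothesis N2 : (2 <= N)%N.
Let E0 := En 0.
Let U := Ubound k2 thinf E0.
Let L := Lbound k2 thinf E0.
Hypothesis Upi : U < pi.
Hypothesis E0lt : E0 < k2 * (offdiag_min thinf) ^+ 2 / (2 * N%:R).
Hypothesis Ucos : 0 < k0 * cos U + k1.

Let s0 := Num.sqrt (2 * N%:R * E0 / k2).

Lemma Npos : (0 < N)%N.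
Proof. by apply: leq_trans N2. Qed.

Lemma sq_bound (Th W : 'I_N -> R) i j : i != j -> energy k2 thinf Th W <= E0 ->
  `|(`|Th j - Th i| - thinf i j)| <= s0.
Proof.
move=> ij HE; have H := le_trans (pair_bound Th W ij) HE.
have N0 : 0 < N%:R :> R by rewrite ltr0n Npos.
set b := `|Th j - Th i| - thinf i j in H *.
rewrite -sqrtr_sqr /s0; apply: ler_wsqrtr.
rewrite ler_pdivlMr //.
have h2 : 0 <= 2 * N%:R :> R by rewrite mulr_ge0 // ltW.
have := ler_wpM2l h2 H.
have -> : 2 * N%:R * (k2 / (2 * N%:R) * b ^+ 2) = b ^+ 2 * k2.
  field; by rewrite lt0r_neq0.
by [].
Qed.

Lemma bound_from_E (Th W : 'I_N -> R) i j : i != j -> energy k2 thinf Th W <= E0 ->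
  L <= `|Th j - Th i| /\ `|Th j - Th i| <= U.
Proof.
move=> ij HE; have := sq_bound ij HE; rewrite ler_norml => /andP [h1 h2].
have := min_le ij; have := max_ge ij.
rewrite /L /U /Lbound /Ubound -/s0 => h3 h4; split; lra.
Qed.

Lemma min_pos : 0 < offdiag_min thinf.
Proof.
have [i [j [ij me]]] := min_attained N2.
have N0 : 0 < N%:R :> R by rewrite ltr0n Npos.
have H := pair_bound (theta 0) (omega 0) ij.
have E1 := E0lt.
rewrite -me in H; rewrite ltNge; apply/negP => m0.
set m := offdiag_min thinf in H m0 E1.
set x := `|theta 0 j - theta 0 i| in H.
have x0 : 0 <= x by rewrite /x normr_ge0.
have c0 : 0 < k2 / (2 * N%:R) by rewrite divr_gt0 // mulr_gt0.
have : k2 / (2 * N%:R) * m ^+ 2 <= k2 / (2 * N%:R) * (x - m) ^+ 2.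
  apply: ler_wpM2l; first exact: ltW.
  rewrite !expr2; nra.
have : k2 * m ^+ 2 / (2 * N%:R) = k2 / (2 * N%:R) * m ^+ 2 by rewrite mulrAC.
rewrite /E0 /En in E1.
lra.
Qed.

Lemma Lpos : 0 < L.
Proof.
have m0 := min_pos.
have N0 : 0 < N%:R :> R by rewrite ltr0n Npos.
rewrite /L /Lbound -/s0 subr_gt0.
rewrite -(gtr0_norm m0) -sqrtr_sqr /s0 ltr_sqrt ?exprn_gt0 //.
rewrite ltr_pdivrMr // mulrC.
have := E0lt; rewrite ltr_pdivlMr ?mulr_gt0 //.
by rewrite [X in _ -> _ < X]mulrC.
Qed.

Definition Good (s : R) := forall i j : 'I_N, i != j ->
  L <= `|theta s j - theta s i| /\ `|theta s j - theta s i| <= U.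

Lemma good_aa (s : R) i j : Good s -> i != j -> 0 < aa s i j.
Proof.
move=> G ij; have [h1 h2] := G i j ij.
have L0 := Lpos.
apply: (lt_le_trans Ucos); rewrite /aa lerD2r; apply: ler_wpM2l => //.
have pi0 : 0 < pi :> R by exact: pi_gt0.
have n0 := normr_ge0 (theta s j - theta s i); have up := Upi.
rewrite -[cos (theta s j - theta s i)]cos_norm leNgt; apply/negP.
rewrite ltr_cos; [by rewrite ltNge h2 | | ]; rewrite in_itv /=; apply/andP; split; lra.
Qed.

Lemma Delta_cont (s : R) i j : 0 <= s -> {for s, continuous (fun u => theta u j - theta u i)}.
Proof.
move=> s0'; apply: der_cont; apply: der_sub; [exact: (HD s0' j).1 | exact: (HD s0' i).1].
Qed.

Lemma local (s : R) : 0 <= s -> Good s -> exists2 d : R, 0 < d & forall u, `|s - u| < d ->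
  (forall i j, i != j -> theta u j - theta u i != 0) /\ (forall i j, 0 <= aa u i j).
Proof.
move=> s0' G.
have L0 := Lpos.
have H : \forall u \near s, forall p : 'I_N * 'I_N, p.1 != p.2 ->
    0 < `|theta u p.2 - theta u p.1| /\ 0 < aa u p.1 p.2.
  have HH : forall p : 'I_N * 'I_N, \forall u \near s, p.1 != p.2 ->
      0 < `|theta u p.2 - theta u p.1| /\ 0 < aa u p.1 p.2; last first.
    exact: (filter_forall _ HH).
  move=> -[i j] /=.
  have [->|ij] := eqVneq i j; first by apply: filterE.
  have C := Delta_cont (i:=i) (j:=j) s0'.
  have C1 : {for s, continuous (fun x => `|theta x j - theta x i|)} by apply: cvg_norm.
  have C2 : {for s, continuous (fun u => aa u i j)}.
    apply: cvgD; last exact: cvg_cst.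
    apply: cvgM; first exact: cvg_cst.
    first [exact: (continuous_comp C (continuous_cos _)) | exact: (cvg_comp C (continuous_cos _)) | apply: continuous_comp; [exact: C | exact: continuous_cos]].
  have g1 : 0 < `|theta s j - theta s i| by have [h1 _] := G i j ij; lra.
  have g2 := good_aa G ij.
  have N1 : (\forall u \near s, 0 < `|theta u j - theta u i|) by exact: (cvgr_gt _ C1 _ g1).
  have N2' : (\forall u \near s, 0 < aa u i j) by exact: (cvgr_gt _ C2 _ g2).
  by apply: filterS2 N1 N2' => u h1 h2 _; split.
have [d d0 Hd] := near_ex H.
exists d => // u su; split.
  move=> i j ij; have := (Hd u su (i, j) ij).1 => /=.
  by rewrite normr_gt0.
move=> i j; have [->|ij] := eqVneq i j.
  by rewrite /aa subrr cos0 mulr1 addr_ge0.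
exact: ltW (Hd u su (i, j) ij).2.
Qed.

Lemma good_of (s : R) : En s <= E0 -> Good s.
Proof. move=> HE i j ij; exact: bound_from_E ij HE. Qed.

Lemma En_le (t : R) : 0 <= t -> En t <= E0.
Proof.
move=> t0; rewrite leNgt; apply/negP => Ht.
pose B := [set s : R | 0 <= s /\ forall u : R, 0 <= u -> u <= s -> En u <= E0].
have B0 : B 0.
  split => // u u0 u0'; have -> : u = 0 by apply/eqP; rewrite eq_le u0 u0'.
  by [].
have Bub : ubound B t.
  move=> s [s0' Hs]; rewrite leNgt; apply/negP => ts.
  have := Hs t t0 (ltW ts); rewrite leNgt Ht //.
have hs : has_sup B by split; [exists 0 | exists t].
set ss := sup B.
have ss0 : 0 <= ss by exact: sup_upper_bound hs _ B0.
have below : forall u, 0 <= u -> u < ss -> En u <= E0.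
  move=> u u0 us; have [y [y0 Hy] uy] := sup_gt (ex_intro _ 0 B0) us.
  exact: Hy u u0 (ltW uy).
have G : Good ss.
  case: (ltrP 0 ss) => [ssp|ssn]; last first.
    have -> : ss = 0 by apply/eqP; rewrite eq_le ssn ss0.
    by apply: good_of.
  move=> i j ij.
  have C := Delta_cont (i:=i) (j:=j) ss0.
  have C1 : {for ss, continuous (fun x => `|theta x j - theta x i|)} by apply: cvg_norm.
  have C2 : {for ss, continuous (fun x => - `|theta x j - theta x i|)} by apply: cvgN.
  split.
    rewrite -lerN2; apply: (closure_le C2 ssp) => u u0 us.
    rewrite lerN2; exact: (good_of (below u u0 us) ij).1.
  apply: (closure_le C1 ssp) => u u0 us.
  exact: (good_of (below u u0 us) ij).2.
have [d d0 Hd] := local ss0 G.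
have Der : forall u, 0 <= u -> `|ss - u| < d -> is_derive u (1:R) En (Dexp u) /\ Dexp u <= 0.
  move=> u u0 ud; have [h1 h2] := Hd u ud; split.
    exact: En_der.
  exact: Dexp_le0 Npos h2.
have [w [w0 [wss [wd Ew]]]] : exists w, 0 <= w /\ w <= ss /\ `|ss - w| < d /\ En w <= E0.
  case: (ltrP 0 ss) => [ssp|ssn]; last first.
    have e0 : ss = 0 by apply/eqP; rewrite eq_le ssn ss0.
    exists 0; split => //; split; first by rewrite e0.
    by split => //; rewrite e0 subr0 normr0.
  have m0 : 0 < Num.min ss d by rewrite lt_min ssp d0.
  have mx : Num.min ss d <= ss by rewrite ge_min lexx.
  have md : Num.min ss d <= d by rewrite ge_min lexx orbT.
  exists (ss - Num.min ss d / 2).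
  have hh : ss - (ss - Num.min ss d / 2) = Num.min ss d / 2 by ring.
  split; first by lra.
  split; first by lra.
  split; first by rewrite hh gtr0_norm; lra.
  by apply: below; lra.
have : B (ss + d / 2).
  split; first lra.
  move=> u u0 uv.
  case: (ltrP u ss) => [us|su]; first exact: below.
  have wu : w <= u by lra.
  have hd : forall x, w <= x -> x <= u -> 0 <= x /\ `|ss - x| < d.
    move=> x wx xu; split; first lra.
    rewrite ltr_norml; move: wd; rewrite ltr_norml => /andP [a1 a2].
    apply/andP; split; lra.
  have [c cI Hc] : exists2 c, c \in `[w, u]%R & En u - En w = Dexp c * (u - w).
    apply: MVT_segment => //.
      move=> x; rewrite in_itv /= => /andP [a1 a2].
      have [b1 b2] := hd x (ltW a1) (ltW a2).
      exact: (Der x b1 b2).1.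
    apply: derivable_within_continuous => x; rewrite in_itv /= => /andP [a1 a2].
    have [b1 b2] := hd x a1 a2.
    have HH := (Der x b1 b2).1; by case: HH.
  move: cI; rewrite in_itv /= => /andP [c1 c2].
  have [b1 b2] := hd c c1 c2.
  have Dc := (Der c b1 b2).2.
  have : Dexp c * (u - w) <= 0 by apply: mulr_le0_ge0 => //; lra.
  rewrite -Hc; lra.
move=> /(sup_upper_bound hs); rewrite -/ss; lra.
Qed.

Lemma final : (forall t : R, 0 <= t -> forall i j : 'I_N, i != j -> L <= `|theta t j - theta t i|) /\ 0 < L.
Proof.
split; last exact: Lpos.
move=> t t0 i j ij; exact: (bound_from_E ij (En_le t0)).1.
Qed.
End Main.

Local Close Scope classical_set_scope.
Unset Implicit Arguments.

Theorem corollary3p1 (R : realType) (N : nat) (k0 k1 k2 : R)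
  (thinf : 'I_N -> 'I_N -> R) (theta omega : R -> 'I_N -> R) :
  (2 <= N)%N -> 0 <= k0 -> 0 <= k1 -> 0 < k2 ->
  (forall i j, thinf i j = thinf j i) -> (forall i, thinf i i = 0) ->
  (* global (differentiable) solution on [0, oo) *)
  (forall t : R, 0 <= t -> forall i : 'I_N,
     is_derive t (1 : R) (fun s : R => theta s i) (omega t i) /\
     is_derive t (1 : R) (fun s : R => omega s i)
       (kuramoto_rhs k0 k1 k2 thinf (theta t) (omega t) i)) ->
  let E0 := energy k2 thinf (theta 0) (omega 0) in
  let U := Ubound k2 thinf E0 in
  let L := Lbound k2 thinf E0 in
  (* (Theta^0, W^0) in S *)
  (forall i j, `|theta 0 i - theta 0 j| < U) -> U < pi ->
  E0 < k2 * (offdiag_min thinf) ^+ 2 / (2 * N%:R) ->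
  0 < k0 * cos U + k1 ->
  (forall t : R, 0 <= t -> forall i j : 'I_N, i != j -> L <= `|theta t j - theta t i|) /\ 0 < L.
Proof.
move=> N2 k0ge k1ge k2gt symm diag0 HD E0 U L H0 Upi E0lt Ucos.
exact: (final k2gt symm HD k0ge k1ge N2 Upi E0lt Ucos).
Qed.
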